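(* Algorithm 2 is monotonic. Moreover, for a connected graph $G$ with $n\ge2$ nodes, diameter $D$, and nonnegative integer loads with initial discrepancy $K$, after at most $(8nD+1)\ln(\lceil nK^2/(2D^2)\rceil)+2nD^2$ rounds when $K\ge 2D$ (and at most $2nD^2$ rounds when $K<2D$), hence in $O(nD\log(nK/D)+nD^2)$ time, the graph reaches a $1$-Balanced state, after which the loads never change.
   Context: $G=(V,E)$ is an undirected connected graph, $n=|V|$, $D$ its diameter; each node $u$ holds an integer load $load(u)\ge 0$. $L_{max},L_{min}$ denote the current maximum and minimum load and the discrepancy is $K=L_{max}-L_{min}$. A state is $1$-Balanced if every two adjacent nodes have loads differing by at most $1$. Algorithm 2 (single proposal, discrete) proceeds in synchronous rounds; in each round, using the loads at the start of the round: (1) every node $u$ having at least one neighbor $v$ with $load(v)\le load(u)-2$ picks the first neighbor $v$ (in a fixed order of its neighbors) maximizing $load(u)-load(v)$ and sends $v$ a proposal of value $p_{uv}=\lfloor (load(u)-load(v))/2\rfloor$; (2) every node that received at least one proposal accepts exactly one proposal of maximum value; (3) all accepted transfers are executed simultaneously (each accepted proposal $p_{wu}$ moves $p_{wu}$ from $w$ to $u$), and nodes report their new loads to neighbors. An algorithm is monotonic if in every execution (a) each load transfer goes from a higher-loaded node to a less-loaded one, and (b) the maximum load never increases and the minimum load never decreases. *)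

(* Defs.v *)
From Stdlib Require Import Reals.
From mathcomp Require Import all_boot.
Set Implicit Arguments. Unset Strict Implicit. Unset Printing Implicit Defensive.

Section LoadBalancing.
Variable T : finType.
Variable e : rel T.
Variable nb : T -> seq T.        (* fixed order of the neighbours of each node *)

Definition load := T -> nat.

Definition simple_graph := symmetric e /\ irreflexive e.
Definition connected_graph := forall u v : T, connect e u v.
Definition nb_order := forall u, uniq (nb u) /\ forall v, (v \in nb u) = e u v.

Definition walkb (k : nat) (u v : T) : bool :=
  [exists p : k.-tuple T, path e u p && (last u p == v)].
Definition dist (u v : T) : nat := find (fun k => walkb k u v) (iota 0 #|T|).
Definition diameter : nat := \max_(u : T) \max_(v : T) dist u v.

Definition Lmax (L : load) : nat := \max_(u : T) L u.
Definition Lmin (L : load) : nat := \big[minn/Lmax L]_(u : T) L u.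
Definition discrepancy (L : load) : nat := Lmax L - Lmin L.

Definition one_balanced (L : load) : Prop :=
  forall u v, e u v -> L u <= L v + 1 /\ L v <= L u + 1.

Definition proposes (L : load) (u : T) : bool := has (fun v => L v + 2 <= L u) (nb u).
Definition maxgap (L : load) (u : T) : nat := \max_(v <- nb u) (L u - L v).
Definition target (L : load) (u : T) : option T :=
  if proposes L u then Some (nth u (nb u) (find (fun v => L u - L v == maxgap L u) (nb u)))
  else None.
Definition pval (L : load) (u v : T) : nat := (L u - L v) %/ 2.

(* Step (2): acc v = Some w means v accepts the proposal of w. Any choice
   among the proposals of maximum value is allowed. *)
Definition valid_acc (L : load) (acc : T -> option T) : Prop :=
  forall v,
    (acc v = None <-> forall u, target L u <> Some v) /\
    (forall w, acc v = Some w ->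
       target L w = Some v /\
       forall u, target L u = Some v -> pval L u v <= pval L w v).

Definition next (L : load) (acc : T -> option T) : load := fun u =>
  L u + (if acc u is Some w then pval L w u else 0)
      - \sum_(v : T | acc v == Some u) pval L u v.

(* An execution of Algorithm 2: X t = loads after t rounds, A t = acceptances of round t+1 *)
Definition execution (X : nat -> load) (A : nat -> T -> option T) : Prop :=
  forall t, valid_acc (X t) (A t) /\ X t.+1 = next (X t) (A t).

End LoadBalancing.

(* Main.v *)
Require Import Defs.
From Stdlib Require Import Reals.
From mathcomp Require Import all_boot zify ring.
From Stdlib Require Import Classical Lra.
Set Implicit Arguments. Unset Strict Implicit. Unset Printing Implicit Defensive.

Lemma seqmax_attained (T : eqType) (s : seq T) (f : T -> nat) :
  s != [::] -> has (fun v => f v == \max_(v <- s) f v) s.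
Proof.
elim: s => [|a s IH] //= _; rewrite big_cons.
case: s IH => [|b s] IH.
  by rewrite big_nil maxn0 eqxx.
have /hasP[c cin /eqP hc] := IH isT.
case: (leqP (f a) (\max_(v <- b :: s) f v)) => h.
  by apply/orP; right; apply/hasP; exists c => //; apply/eqP; rewrite hc; lia.
by apply/orP; left; apply/eqP; lia.
Qed.

Section Round.
Variable T : finType.
Variable e : rel T.
Variable nb : T -> seq T.
Hypothesis Hsym : symmetric e.
Hypothesis Hnb : nb_order e nb.

Lemma maxgap_ge (L : load T) u v : e u v -> L u - L v <= maxgap nb L u.
Proof.
move=> euv; rewrite /maxgap; apply: (@leq_bigmax_seq _ _ xpredT (fun v => L u - L v)) => //.
by case: (Hnb u) => _ ->.
Qed.

Lemma target_spec (L : load T) u v : target nb L u = Some v ->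
  [/\ e u v, L u - L v = maxgap nb L u & 2 <= maxgap nb L u].
Proof.
rewrite /target; case: ifP => // hp [<-].
move: (hp); rewrite /proposes => /hasP[v0 v0in hv0].
have ne : nb u != [::] by case: (nb u) v0in.
have H := seqmax_attained (fun v => L u - L v) ne.
have hf := nth_find u H; move: hf => /eqP hf.
have ein : nth u (nb u) (find (fun v => L u - L v == maxgap nb L u) (nb u)) \in nb u.
  by apply: mem_nth; rewrite -has_find.
have e0 : e u v0 by case: (Hnb u) => _ <-.
have := maxgap_ge L e0; split => //.
  by case: (Hnb u) => _ <-.
lia.
Qed.

Lemma propose_target (L : load T) u v : e u v -> L v + 2 <= L u ->
  exists y, target nb L u = Some y /\ L u - L v <= L u - L y.
Proof.
move=> euv h.
have hp : proposes nb L u.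
  by apply/hasP; exists v => //; case: (Hnb u) => _ ->.
case hy : (target nb L u) => [y|]; last by move: hy; rewrite /target hp.
exists y; split => //.
have [_ -> _] := target_spec hy; exact: maxgap_ge.
Qed.

Lemma target_lt (L : load T) u v : target nb L u = Some v -> L v + 2 <= L u.
Proof. by move=> /target_spec [_ h1 h2]; lia. Qed.

Lemma target_uniq (L : load T) u v1 v2 :
  target nb L u = Some v1 -> target nb L u = Some v2 -> v1 = v2.
Proof. by move=> -> []. Qed.

Section Acc.
Variable L : load T.
Variable acc : T -> option T.
Hypothesis Hacc : valid_acc nb L acc.

Lemma acc_target v w : acc v = Some w -> target nb L w = Some v.
Proof. by move=> h; case: (Hacc v) => _ /(_ w h) []. Qed.

Lemma acc_max v w u : acc v = Some w -> target nb L u = Some v -> pval L u v <= pval L w v.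
Proof. by move=> h; case: (Hacc v) => _ /(_ w h) [] _; apply. Qed.

Lemma acc_some u v : target nb L u = Some v -> exists w, acc v = Some w.
Proof.
move=> h; case hv: (acc v) => [w|]; first by exists w.
by case: (Hacc v) => [[/(_ hv) /(_ u) ]].
Qed.

Lemma acc_lt v w : acc v = Some w -> L v + 2 * pval L w v <= L w.
Proof.
move=> /acc_target /target_lt h; rewrite /pval.
have := leq_trunc_div (L w - L v) 2; rewrite mulnC; lia.
Qed.

Definition Pv v := if acc v is Some w then pval L w v else 0.
Definition Wv v := if acc v is Some w then L w else 0.
Definition sv u := \sum_(v | acc v == Some u) pval L u v.

Lemma sum_acc (F : T -> nat) u :
  \sum_(v | acc v == Some u) F v = oapp F 0 [pick v | acc v == Some u].
Proof.
case: pickP => [v0 /eqP h0 | h] /=; last by rewrite big_pred0.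
rewrite (bigD1 v0) ?h0 ?eqxx //= big1 ?addn0 // => v /andP[/eqP hv ne].
have := target_uniq (acc_target h0) (acc_target hv).
by move=> E; rewrite E eqxx in ne.
Qed.

Lemma exch (G : T -> T -> nat) :
  \sum_u \sum_(v | acc v == Some u) G u v = \sum_v oapp (fun w => G w v) 0 (acc v).
Proof.
rewrite (exchange_big_dep xpredT) //=; apply: eq_bigr => v _.
case: (acc v) => [w|] /=.
  rewrite (eq_bigl (fun u => u == w)) ?big_pred1_eq // => u.
  by rewrite eq_sym; apply/eqP/eqP => [[]|->].
by rewrite big_pred0.
Qed.

Lemma sv_cases u : sv u = 0 \/ exists v0, acc v0 = Some u /\ sv u = pval L u v0.
Proof.
rewrite /sv sum_acc; case: pickP => [v0 /eqP h|] /=; last by left.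
by right; exists v0.
Qed.

Lemma sv_sq u : sv u ^ 2 = \sum_(v | acc v == Some u) pval L u v ^ 2.
Proof. by rewrite /sv !sum_acc; case: pickP. Qed.

Lemma next_eq u : Defs.next L acc u + sv u = L u + Pv u.
Proof.
rewrite /Defs.next -/(Pv u) -/(sv u).
case: (sv_cases u) => [->|[v0 [h ->]]]; first by lia.
have := acc_lt h; lia.
Qed.

Lemma sum_sv : \sum_u sv u = \sum_v Pv v.
Proof. by rewrite /sv exch; apply: eq_bigr => v _; rewrite /Pv; case: (acc v). Qed.

Lemma sum_next : \sum_u Defs.next L acc u = \sum_u L u.
Proof.
have: \sum_u Defs.next L acc u + \sum_u sv u = \sum_u L u + \sum_u Pv u.
  by rewrite -!big_split /=; apply: eq_bigr => u _; apply: next_eq.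
by rewrite sum_sv; lia.
Qed.

Lemma sum2 (F : T -> nat) : \sum_u 2 * F u = 2 * \sum_u F u.
Proof. by rewrite big_distrr. Qed.

Lemma sq_decrease :
  \sum_u Defs.next L acc u ^ 2 + 2 * \sum_v Pv v ^ 2 <= \sum_u L u ^ 2.
Proof.
have h1 : \sum_u Defs.next L acc u ^ 2 + 2 * \sum_u (L u * sv u) <=
          \sum_u L u ^ 2 + 2 * \sum_u (L u * Pv u) + \sum_u Pv u ^ 2 + \sum_u sv u ^ 2.
  rewrite -!sum2 -!big_split /=; apply: leq_sum => u _; have := next_eq u; nia.
have e1 : \sum_u L u * sv u = \sum_v Wv v * Pv v.
  under eq_bigr do rewrite /sv big_distrr /=.
  by rewrite exch; apply: eq_bigr => v _; rewrite /Wv /Pv; case: (acc v).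
have e2 : \sum_u sv u ^ 2 = \sum_v Pv v ^ 2.
  under eq_bigr do rewrite sv_sq.
  by rewrite exch; apply: eq_bigr => v _; rewrite /Pv; case: (acc v).
have h2 : \sum_v (L v * Pv v) + 2 * \sum_v Pv v ^ 2 <= \sum_v Wv v * Pv v.
  rewrite -sum2 -big_split /=.
  apply: leq_sum => v _; rewrite /Wv /Pv; case hv: (acc v) => [w|]; last by lia.
  have := acc_lt hv; nia.
move: h1 h2; rewrite e1 e2; lia.
Qed.

Lemma next_le_max u : Defs.next L acc u <= Lmax L.
Proof.
have := next_eq u; rewrite /Pv; case hu: (acc u) => [w|].
  have := acc_lt hu; have : L w <= Lmax L by apply: leq_bigmax.
  lia.
have : L u <= Lmax L by apply: leq_bigmax.
lia.
Qed.

Lemma Lmin_le (L0 : load T) u : Lmin L0 <= L0 u.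
Proof.
rewrite /Lmin; have : u \in index_enum T by rewrite mem_index_enum.
elim: (index_enum T) => [|a r IH] //; rewrite big_cons inE => /orP[/eqP <-|/IH]; lia.
Qed.

Lemma next_ge_min u : Lmin L <= Defs.next L acc u.
Proof.
have := next_eq u; case: (sv_cases u) => [->|[v0 [h ->]]].
  have := Lmin_le L u; lia.
have := acc_lt h; have := Lmin_le L v0; lia.
Qed.

End Acc.
End Round.

Lemma cs_aux (I : Type) (r : seq I) (a : I -> nat) x :
  2 * x * \sum_(i <- r) a i <= size r * x ^ 2 + \sum_(i <- r) a i ^ 2.
Proof.
elim: r => [|b r IH]; first by rewrite !big_nil; lia.
rewrite !big_cons /=.
have : 2 * x * a b <= x ^ 2 + a b ^ 2.
  case: (leqP x (a b)) => h.
    have -> : a b = x + (a b - x) by lia.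
    nia.
  have -> : x = a b + (x - a b) by lia.
  nia.
nia.
Qed.

Lemma cs_seq (I : Type) (r : seq I) (a : I -> nat) :
  (\sum_(i <- r) a i) ^ 2 <= size r * \sum_(i <- r) a i ^ 2.
Proof.
elim: r => [|b r IH]; first by rewrite !big_nil.
rewrite !big_cons /=; have := cs_aux r a (a b); nia.
Qed.

Lemma cs_ord k (a : nat -> nat) :
  (\sum_(i < k) a i) ^ 2 <= k * \sum_(i < k) a i ^ 2.
Proof. rewrite -(big_mkord xpredT a) -(big_mkord xpredT (fun i => a i ^ 2)) /index_iota subn0; have := cs_seq (iota 0 k) a; rewrite size_iota; exact. Qed.

Lemma telescope (f : nat -> nat) k : f 0 <= f k + \sum_(i < k) (f i - f i.+1).
Proof.
elim: k => [|k IH]; first by rewrite big_ord0; lia.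
rewrite big_ord_recr /=.
have -> : \sum_(i < k) (f (widen_ord (leqnSn k) i) - f (widen_ord (leqnSn k) i).+1) = \sum_(i < k) (f i - f i.+1) by apply: eq_bigr.
lia.
Qed.

Lemma count_window (c : pred nat) k :
  (forall a b, a < k -> b < k -> c a -> c b -> a < b -> b < a + 3) ->
  count c (iota 0 k) <= 3.
Proof.
move=> H; rewrite -size_filter.
have srt : sorted ltn [seq i <- iota 0 k | c i] by apply: sorted_filter; [exact: ltn_trans|exact: iota_ltn_sorted].
have mem : forall i, i \in [seq i <- iota 0 k | c i] -> i < k /\ c i.
  by move=> i; rewrite mem_filter mem_iota; case/andP => -> /andP[_]; rewrite add0n.
case E: [seq i <- iota 0 k | c i] srt mem => [|a [|b [|d [|f r]]]] //= srt mem.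
move: srt => /andP[ab /andP[bd /andP[df _]]].
have [ha ca] := mem a (mem_head _ _).
have [hf cf] : f < k /\ c f by apply: mem; rewrite !inE eqxx !orbT.
have := H a f ha hf ca cf; lia.
Qed.

Section Walks.
Variable T : finType.
Variable e : rel T.
Hypothesis Hsym : symmetric e.

Lemma walkb_of (x : T) (s : seq T) : path e x s -> walkb e (size s) x (last x s).
Proof. by move=> p; apply/existsP; exists (in_tuple s); rewrite p eqxx. Qed.

Lemma walk_has (u v : T) : connect e u v -> has (fun k => walkb e k u v) (iota 0 #|T|).
Proof.
move=> /connectP[p pp ->]; case: (shortenP pp) => p' pp' uq _.
apply/hasP; exists (size p'); last exact: walkb_of.
rewrite mem_iota add0n /=.
have := max_card [pred x | x \in u :: p']; move/card_uniqP: uq => /= ->; lia.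
Qed.

Lemma dist_spec (u v : T) : connect e u v ->
  exists s, [/\ path e u s, last u s = v, size s = Defs.dist e u v &
    forall j, j < size s -> ~~ walkb e j u v].
Proof.
move=> /walk_has H.
have hf := nth_find 0 H; have lt := H; rewrite has_find size_iota in lt.
rewrite nth_iota // add0n in hf.
case/existsP: hf => p /andP[pp /eqP pl].
exists (val p); split => //; first by rewrite size_tuple.
move=> j; rewrite size_tuple => hj.
have := before_find 0 hj; rewrite nth_iota ?add0n ?(ltn_trans hj) //.
by move=> ->.
Qed.

Lemma last_take (x0 : T) (s : seq T) a : a <= size s ->
  last x0 (take a s) = nth x0 (x0 :: s) a.
Proof.
move=> ha; rewrite (last_nth x0) size_take.
case: a ha => [|a] ha /=; first by case: ifP => // /negbT; rewrite -leqNgt leqn0 => /eqP ->.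
rewrite (_ : (if a.+1 < size s then a.+1 else size s) = a.+1); last by case: ifP => // /negbT; lia.
by rewrite /= nth_take.
Qed.

Lemma shortcut (x0 y : T) (s : seq T) a b :
  path e x0 s -> b <= size s -> a + 3 <= b ->
  e (nth x0 (x0 :: s) a) y -> e (nth x0 (x0 :: s) b) y ->
  exists j, j < size s /\ walkb e j x0 (last x0 s).
Proof.
move=> ps hb hab ea eb.
set s' := take a s ++ y :: nth x0 (x0 :: s) b :: drop b s.
have ha : a <= size s by lia.
exists (size s'); split.
  rewrite /s' size_cat size_take /= size_drop; case: ifP => h; lia.
have -> : last x0 s = last x0 s'.
  rewrite /s' last_cat /= -(last_take x0 hb).
  by rewrite -last_cat cat_take_drop.
apply: walkb_of; rewrite /s' cat_path last_take //.
have := ps; rewrite -{1}(cat_take_drop a s) cat_path => /andP[-> _] /=.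
rewrite ea /= Hsym eb /=.
by move: ps; rewrite -{1}(cat_take_drop b s) cat_path (last_take x0 hb) => /andP[_ ->].
Qed.

End Walks.

Section Contraction.
Variable T : finType.
Variable e : rel T.
Variable nb : T -> seq T.
Hypothesis Hsym : symmetric e.
Hypothesis Hnb : nb_order e nb.
Variable L : load T.
Variable acc : T -> option T.
Hypothesis Hacc : valid_acc nb L acc.

Lemma contraction (x0 : T) (s : seq T) :
  path e x0 s -> (forall j, j < size s -> ~~ walkb e j x0 (last x0 s)) ->
  (L x0 - L (last x0 s) - size s) ^ 2 <=
    6 * size s * (\sum_u L u ^ 2 - \sum_u Defs.next L acc u ^ 2).
Proof.
move=> ps Hmin.
set k := size s.
pose node i := nth x0 (x0 :: s) i.
pose g i := L (node i) - L (node i.+1).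
pose Q i := oapp (fun y => Pv L acc y ^ 2) 0 (target nb L (node i)).
have H0 : L x0 <= L (last x0 s) + \sum_(i < k) g i.
  have := telescope (fun i => L (node i)) k.
  by rewrite /node /= -(last_nth x0).
have H1 : \sum_(i < k) g i <= \sum_(i < k) (g i - 1) + k.
  have : \sum_(i < k) g i <= \sum_(i < k) ((g i - 1) + 1) by apply: leq_sum => i _; lia.
  by rewrite big_split /= sum1_card card_ord.
have H2 := cs_ord k (fun i => g i - 1).
have H3 : \sum_(i < k) (g i - 1) ^ 2 <= 4 * \sum_(i < k) Q i.
  rewrite big_distrr /=; apply: leq_sum => i _.
  have hq : (g i %/ 2) ^ 2 <= Q i.
    case: (leqP 2 (g i)) => hg; last by rewrite divn_small.
    have eu : e (node i) (node i.+1).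
      by move/(pathP x0): ps => /(_ i (ltn_ord i)).
    have hl : L (node i.+1) + 2 <= L (node i) by move: hg; rewrite /g; lia.
    have [y [ty hy]] := propose_target Hnb eu hl.
    have [w hw] := acc_some Hacc ty.
    have hm := acc_max Hacc hw ty.
    rewrite /Q ty /= /Pv hw leq_sqr.
    apply: leq_trans hm; rewrite /pval; apply: leq_div2r; exact: hy.
  have := divn_eq (g i) 2; have := ltn_pmod (g i) (isT : 0 < 2).
  nia.
have H4 : \sum_(i < k) Q i <= 3 * \sum_y Pv L acc y ^ 2.
  have eQ : forall i, Q i = \sum_y (target nb L (node i) == Some y) * Pv L acc y ^ 2.
    move=> i; rewrite /Q; case: (target nb L (node i)) => [y0|] /=.
      rewrite (bigD1 y0) //= eqxx mul1n big1 ?addn0 // => y ne.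
      rewrite (_ : (Some y0 == Some y) = false) //; apply/eqP => -[E].
      by rewrite E eqxx in ne.
    by rewrite big1.
  rewrite (eq_bigr _ (fun (i : 'I_k) _ => eQ i)).
  rewrite exchange_big big_distrr /=; apply: leq_sum => y _.
  rewrite -big_distrl /= leq_mul2r; apply/orP; right.
  set c := fun i => target nb L (node i) == Some y.
  have -> : \sum_(i < k) (target nb L (node i) == Some y) = count c (iota 0 k).
    rewrite -(big_mkord xpredT (fun i => nat_of_bool (c i))) /index_iota subn0.
    rewrite -sum1_count [in RHS]big_mkcond; apply: eq_bigr => i _ /=; by case: (c i).
  apply: count_window => a b ha hb ca cb hab.
  rewrite ltnNge; apply/negP => hab3.
  have [ea _ _] := target_spec Hnb (eqP ca).
  have [eb _ _] := target_spec Hnb (eqP cb).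
  have [j [hj wj]] := shortcut Hsym ps (ltnW hb) hab3 ea eb.
  by move: (Hmin j hj); rewrite wj.
have H5 := sq_decrease Hnb Hacc.
have E1 : L x0 - L (last x0 s) - k <= \sum_(i < k) (g i - 1) by lia.
rewrite -leq_sqr in E1.
apply: (leq_trans E1); apply: (leq_trans H2).
have : k * \sum_(i < k) (g i - 1) ^ 2 <= k * (4 * \sum_(i < k) Q i) by rewrite leq_mul2l H3 orbT.
have : k * (4 * \sum_(i < k) Q i) <= k * (4 * (3 * \sum_y Pv L acc y ^ 2)).
  by rewrite !leq_mul2l H4 !orbT.
nia.
Qed.

End Contraction.

Lemma arith1 n a c m K : a <= K * c -> 2 * (n * K) * (2 * c) <= (n * K) ^ 2 + (2 * c) ^ 2 ->
  4 * (n * (a + 2 * m * c + n * m ^ 2) - (c + n * m) ^ 2) <= n ^ 2 * K ^ 2.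
Proof.
move=> h1 h2.
have e4 : n * (a + 2 * m * c + n * m ^ 2) = n * a + (2 * n * m * c + n ^ 2 * m ^ 2) by nia.
have e5 : (c + n * m) ^ 2 = c ^ 2 + (2 * n * m * c + n ^ 2 * m ^ 2) by nia.
rewrite e4 e5 subnDr.
have : n * a <= n * (K * c) by rewrite leq_mul2l h1 orbT.
nia.
Qed.

Lemma amgm x y : 2 * x * y <= x ^ 2 + y ^ 2.
Proof.
case: (leqP x y) => h.
  have -> : y = x + (y - x) by lia.
  nia.
have -> : x = y + (x - y) by lia.
nia.
Qed.

Section Global.
Variable T : finType.
Variable e : rel T.
Variable nb : T -> seq T.
Variable X : nat -> load T.
Variable A : nat -> T -> option T.
Hypothesis Hsym : symmetric e.
Hypothesis Hconn : connected_graph e.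
Hypothesis Hnb : nb_order e nb.
Hypothesis Hex : execution nb X A.

Definition Sq (L : load T) := \sum_u L u ^ 2.
Definition Sm (L : load T) := \sum_u L u.

Lemma cs_T (L : load T) : Sm L ^ 2 <= #|T| * Sq L.
Proof. by rewrite /Sm /Sq cardT enumT; apply: cs_seq. Qed.

Lemma Lmax_attained (L : load T) : 0 < #|T| -> exists u, L u = Lmax L.
Proof. by move=> h; case: (eq_bigmax L h) => u hu; exists u; rewrite /Lmax hu. Qed.

Lemma Lmin_attained (L : load T) : 0 < #|T| -> exists u, L u = Lmin L.
Proof.
move=> /card_gt0P[u0 _].
pose um := [arg min_(i < u0) L i].
have hm : forall i, L um <= L i by rewrite /um; case: arg_minnP => // i _ H j; apply: H.
exists um; apply/eqP; rewrite eqn_leq Lmin_le andbT /Lmin.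
apply: (big_ind (fun x => L um <= x)).
- exact: leq_bigmax.
- by move=> x y hx hy; rewrite leq_min hx hy.
- by move=> i _; apply: hm.
Qed.

Lemma Lmax_ge (L : load T) u : L u <= Lmax L.
Proof. exact: leq_bigmax. Qed.

Lemma Psi_upper (L : load T) :
  4 * (#|T| * Sq L - Sm L ^ 2) <= #|T| ^ 2 * (Lmax L - Lmin L) ^ 2.
Proof.
set n := #|T|; set m := Lmin L; set K := Lmax L - Lmin L.
pose b u := L u - m.
have hb : forall u, b u <= K by move=> u; have := Lmax_ge L u; rewrite /b /K; lia.
have e1 : Sq L = Sq b + 2 * m * Sm b + n * m ^ 2.
  rewrite /Sq /Sm big_distrr -sum_nat_const -!big_split /=; apply: eq_bigr => u _.
  have := Lmin_le L u; rewrite /b -/m; nia.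
have e2 : Sm L = Sm b + n * m.
  rewrite /Sm -sum_nat_const -big_split /=; apply: eq_bigr => u _.
  have := Lmin_le L u; rewrite /b -/m; lia.
have e3 : Sq b <= K * Sm b.
  rewrite /Sq /Sm big_distrr; apply: leq_sum => u _; have := hb u; rewrite /=; set z := b u; move=> hz.
  by rewrite expnS expn1 leq_mul2r hz orbT.
rewrite e1 e2; apply: arith1 => //; exact: amgm.
Qed.

Lemma round t : valid_acc nb (X t) (A t) /\ X t.+1 = Defs.next (X t) (A t).
Proof. exact: Hex. Qed.

Lemma Sm_const t : Sm (X t) = Sm (X 0).
Proof.
elim: t => // t IH; case: (round t) => hv ->.
by rewrite -IH /Sm (sum_next Hnb hv).
Qed.

Lemma Sq_step t : Sq (X t.+1) + 2 * \sum_v Pv (X t) (A t) v ^ 2 <= Sq (X t).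
Proof. by case: (round t) => hv ->; apply: (sq_decrease Hnb hv). Qed.

Lemma balanced_step t : one_balanced e (X t) -> forall u, X t.+1 u = X t u.
Proof.
move=> hb; case: (round t) => hv -> u.
have nt : forall w v, target nb (X t) w <> Some v.
  move=> w v /(target_spec Hnb) [ewv h1 h2].
  have := hb w v ewv; have := maxgap_ge Hnb (X t) ewv; lia.
have an : forall v, A t v = None by move=> v; case: (hv v) => [[_ H] _]; apply: H => w; apply: nt.
rewrite /Defs.next an /= big_pred0 => [|v]; [by rewrite addn0 subn0 | by rewrite an].
Qed.

Lemma balanced_forever t : one_balanced e (X t) -> forall s, t <= s -> forall u, X s u = X t u.
Proof.
move=> hb s /subnKC <-; elim: (s - t) => [|k IH] u; first by rewrite addn0.
rewrite addnS balanced_step ?IH // => v w evw; rewrite !IH; exact: hb.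
Qed.

Lemma unbalanced_step t : ~ one_balanced e (X t) -> Sq (X t.+1) + 2 <= Sq (X t).
Proof.
move=> nb0.
case: (boolP [exists u, exists v, e u v && ((X t) v + 2 <= (X t) u)]).
  move=> /existsP[u /existsP[v /andP[euv h]]].
  case: (round t) => hv _.
  have [y [ty hy]] := propose_target Hnb euv h.
  have [w hw] := acc_some hv ty.
  have hm := acc_max hv hw ty.
  have hP : 1 <= Pv (X t) (A t) y.
    rewrite /Pv hw; apply: leq_trans hm; rewrite /pval.
    have := target_lt Hnb ty; move=> hl.
    by rewrite divn_gt0 //; lia.
  have : 1 <= \sum_v Pv (X t) (A t) v ^ 2.
    by rewrite (bigD1 y) //=; have := hP; nia.
  have := Sq_step t; lia.
move=> hn; exfalso; apply: nb0 => u v euv.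
have h1 : ~~ ((X t) v + 2 <= (X t) u).
  by apply/negP => h; move/negP: hn; apply; apply/existsP; exists u; apply/existsP; exists v; rewrite euv.
have h2 : ~~ ((X t) u + 2 <= (X t) v).
  apply/negP => h; move/negP: hn; apply; apply/existsP; exists v; apply/existsP; exists u.
  by rewrite Hsym euv.
split; lia.
Qed.


Definition Psi t := #|T| * Sq (X t) - Sm (X 0) ^ 2.

Lemma Psi_eq t : Psi t + Sm (X 0) ^ 2 = #|T| * Sq (X t).
Proof. have := cs_T (X t); rewrite Sm_const /Psi; lia. Qed.

Lemma Sq_mono t : Sq (X t.+1) <= Sq (X t).
Proof. have := Sq_step t; lia. Qed.

Lemma Psi_drop t : Psi t.+1 + #|T| * (Sq (X t) - Sq (X t.+1)) = Psi t.
Proof.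
have h1 := Psi_eq t; have h2 := Psi_eq t.+1; have h3 := Sq_mono t.
rewrite mulnBr in h1 *.
have : #|T| * Sq (X t.+1) <= #|T| * Sq (X t) by rewrite leq_mul2l h3 orbT.
lia.
Qed.

Lemma dist_le_D u v : Defs.dist e u v <= diameter e.
Proof.
have h1 : Defs.dist e u v <= \max_(w : T) Defs.dist e u w.
  exact: (@leq_bigmax _ (fun w => Defs.dist e u w) v).
have h2 := @leq_bigmax _ (fun u => \max_(w : T) Defs.dist e u w) u.
exact: leq_trans h1 h2.
Qed.

Lemma phase1_step t : #|T| ^ 2 * diameter e ^ 2 < Psi t ->
  6 * #|T| * diameter e * Psi t.+1 + Psi t <= 6 * #|T| * diameter e * Psi t.
Proof.
move=> hP.
set n := #|T|; set D := diameter e.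
set K := Lmax (X t) - Lmin (X t).
set Dl := Sq (X t) - Sq (X t.+1).
have hn : 0 < n.
  rewrite lt0n; apply/negP => /eqP n0; move: hP; rewrite /Psi -/n n0; lia.
have hU : 4 * Psi t <= n ^ 2 * K ^ 2.
  by have := Psi_upper (X t); rewrite Sm_const.
have hK : 2 * D < K.
  rewrite ltnNge; apply/negP => hk.
  have : K ^ 2 <= (2 * D) ^ 2 by rewrite leq_sqr.
  rewrite expnMn => hk2.
  have : n ^ 2 * K ^ 2 <= n ^ 2 * (2 ^ 2 * D ^ 2) by rewrite leq_mul2l hk2 orbT.
  lia.
have [umax hmax] := Lmax_attained (X t) hn.
have [umin hmin] := Lmin_attained (X t) hn.
have [s [ps ls ss Hmin]] := dist_spec (Hconn umax umin).
case: (round t) => hv hnext.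
have hc := contraction Hsym Hnb hv ps.
rewrite ls in hc; have := hc Hmin; rewrite -hnext hmax hmin -/(Sq (X t)) -/(Sq (X t.+1)) -/Dl -/K ss.
move=> hc2.
have hk : Defs.dist e umax umin <= D by apply: dist_le_D.
set k := Defs.dist e umax umin in hk hc2.
have h1 : (K - k) ^ 2 <= 6 * D * Dl.
  apply: leq_trans hc2 _; rewrite leq_mul2r leq_mul2l hk !orbT //.
have h0 : K ^ 2 <= 4 * (K - k) ^ 2.
  have : K <= 2 * (K - k) by lia.
  by rewrite -leq_sqr expnMn.
have h2 : 4 * Psi t <= n ^ 2 * (4 * (6 * D * Dl)).
  apply: leq_trans hU _; rewrite leq_mul2l; apply/orP; right.
  apply: leq_trans h0 _; by rewrite leq_mul2l h1 orbT.
have hd := Psi_drop t; rewrite -/n -/Dl in hd.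
have e1 : n ^ 2 * (4 * (6 * D * Dl)) = 4 * (6 * n * D * (n * Dl)) by ring.
rewrite e1 in h2.
have h3 : Psi t <= 6 * n * D * (n * Dl) by lia.
rewrite -hd mulnDr; lia.
Qed.

Lemma phase2_step t : ~ one_balanced e (X t) -> Psi t.+1 + 2 * #|T| <= Psi t.
Proof.
move=> hb; have h := unbalanced_step hb; have hd := Psi_drop t.
have : #|T| * 2 <= #|T| * (Sq (X t) - Sq (X t.+1)) by rewrite leq_mul2l; apply/orP; right; lia.
lia.
Qed.

Lemma phase2 B s : Psi s <= B -> 0 < #|T| ->
  exists j, 2 * #|T| * j <= B /\ one_balanced e (X (s + j)).
Proof.
move=> + hn; elim/ltn_ind: B s => B IH s hB.
case: (classic (one_balanced e (X s))) => hb; first by exists 0; rewrite addn0 muln0.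
have hs := phase2_step hb.
have [j [hj hbj]] := IH (B - 2 * #|T|) (ltac:(lia)) s.+1 (ltac:(lia)).
exists j.+1; split; first by rewrite mulnS; lia.
by rewrite addnS -addSn.
Qed.


Lemma decay t : (forall t', t' < t -> #|T| ^ 2 * diameter e ^ 2 < Psi t') ->
  (6 * #|T| * diameter e) ^ t * Psi t <= (6 * #|T| * diameter e - 1) ^ t * Psi 0.
Proof.
elim: t => [|t IH] H; first by rewrite !expn0 !mul1n.
set c := 6 * #|T| * diameter e.
have h1 := phase1_step (H t (ltnSn t)).
have h2 := IH (fun t' ht' => H t' (ltn_trans ht' (ltnSn t))).
rewrite -/c in h1 h2 *.
set d := c - 1 in h2 *.
have h3 : c * Psi t.+1 <= d * Psi t by rewrite /d mulnBl mul1n; lia.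
have E1 : c ^ t.+1 * Psi t.+1 = c ^ t * (c * Psi t.+1) by rewrite expnS; ring.
have E2 : d ^ t.+1 * Psi 0 = d * (d ^ t * Psi 0) by rewrite expnS; ring.
rewrite E1 E2.
apply: (leq_trans (leq_mul (leqnn _) h3)).
have E3 : c ^ t * (d * Psi t) = d * (c ^ t * Psi t) by ring.
by rewrite E3 leq_mul2l h2 orbT.
Qed.

Lemma phase1_exists : exists t, Psi t <= #|T| ^ 2 * diameter e ^ 2.
Proof.
set B := #|T| ^ 2 * diameter e ^ 2.
have H : forall m, (exists t, Psi t <= B) \/ Psi m + m <= Psi 0.
  elim => [|m [ex|IH]]; [by right; rewrite addn0 | by left | ].
  case: (leqP (Psi m) B) => h; first by left; exists m.
  right; have h1 := phase1_step h.
  have : Psi m.+1 < Psi m.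
    rewrite ltnNge; apply/negP => h2.
    have : 6 * #|T| * diameter e * Psi m <= 6 * #|T| * diameter e * Psi m.+1 by rewrite leq_mul2l h2 orbT.
    lia.
  lia.
case: (H (Psi 0).+1) => //; lia.
Qed.

End Global.
Section RealPart.
Local Open Scope R_scope.

Lemma INR_muln m n : INR (m * n)%N = (INR m * INR n).
Proof. by rewrite -multE mult_INR. Qed.
Lemma INR_addn m n : INR (m + n)%N = (INR m + INR n).
Proof. by rewrite -plusE plus_INR. Qed.
Lemma INR_expn m k : INR (m ^ k)%N = (INR m ^ k).
Proof. elim: k => [|k IH] //=; rewrite expnS INR_muln IH. by []. Qed.
Lemma INR_le m n : (m <= n)%N -> (INR m <= INR n).
Proof. by move/leP; apply: le_INR. Qed.
Lemma INR_lt m n : (m < n)%N -> (INR m < INR n).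
Proof. by move/ltP; apply: lt_INR. Qed.

Lemma ln_le' x y : (0 < x) -> (x <= y) -> (ln x <= ln y).
Proof.
move=> hx hxy; case: (Rle_lt_or_eq_dec _ _ hxy) => h.
  by apply: Rlt_le; apply: ln_increasing.
by rewrite h; apply: Rle_refl.
Qed.

Lemma ln_pred (a : R) : (1 < a) -> (ln (a - 1) <= ln a - / a).
Proof.
move=> ha.
have ha0 : (0 < a) by lra.
have e1 : (a - 1 = a * (1 + - / a)).
  rewrite Rmult_plus_distr_l Rmult_1_r -Ropp_mult_distr_r Rinv_r; lra.
have hpos : (0 < 1 + - / a).
  have : (/ a < 1) by rewrite -Rinv_1; apply: Rinv_lt_contravar; lra.
  lra.
rewrite e1 ln_mult //.
have : (ln (1 + - / a) <= - / a).
  rewrite -{2}(ln_exp (- / a)); apply: ln_le' => //; exact: exp_ineq1_le.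
lra.
Qed.

Lemma final_real (n D K t1 j : nat) :
   (2 <= n)%N -> (1 <= D)%N -> (2 * D <= K)%N ->
   (t1 = 0%N \/ exists m, t1 = m.+1 /\ (4 * D ^ 2 * (6 * n * D) ^ m < K ^ 2 * (6 * n * D - 1) ^ m)%N) ->
   (2 * n * j <= n ^ 2 * D ^ 2)%N ->
   Rle (INR (t1 + j)%N) (Rplus (Rmult (INR (8 * n * D + 1)%N)
                  (ln (INR ((n * K ^ 2 + 2 * D ^ 2 - 1) %/ (2 * D ^ 2))%N))) (INR (2 * n * D ^ 2)%N)).
Proof.
move=> hn hD hK ht hj.
set N := (n * K ^ 2 + 2 * D ^ 2 - 1) %/ (2 * D ^ 2).
have hD2 : (0 < 2 * D ^ 2)%N by rewrite muln_gt0 expn_gt0 hD.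
have hN1 : (n * K ^ 2 <= N * (2 * D ^ 2))%N.
  have := divn_eq (n * K ^ 2 + 2 * D ^ 2 - 1) (2 * D ^ 2).
  have := ltn_pmod (n * K ^ 2 + 2 * D ^ 2 - 1) hD2.
  rewrite -/N; lia.
have hK2 : (1 <= K ^ 2)%N by rewrite expn_gt0; lia.
have hnK : (2 * K ^ 2 <= n * K ^ 2)%N by rewrite leq_mul2r hn orbT.
have hN2 : (K ^ 2 <= 4 * D ^ 2 * N)%N.
  have : (N * (2 * D ^ 2) = 2 * (D ^ 2 * N))%N by ring.
  lia.
have hN3 : (1 <= N)%N.
  rewrite lt0n; apply/negP => /eqP N0; move: hN1; rewrite N0 mul0n.
  have : (1 <= n * K ^ 2)%N by rewrite muln_gt0; lia.
  lia.
have hj1 : (1 + j <= 2 * n * D ^ 2)%N.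
  have h1 : (2 <= n * D ^ 2)%N.
    have : (1 <= D ^ 2)%N by rewrite expn_gt0; lia.
    nia.
  have E1 : (2 * n * j = n * (2 * j))%N by ring.
  have E2 : (n ^ 2 * D ^ 2 = n * (n * D ^ 2))%N by ring.
  have : (n * (2 * j) <= n * (n * D ^ 2))%N by rewrite -E1 -E2.
  rewrite leq_mul2l; case/orP; first by lia.
  lia.
have lnN : (0 <= ln (INR N)).
  rewrite -ln_1; apply: ln_le' => //; first lra.
  by have := INR_le hN3.
have hpos : (0 <= INR (8 * n * D + 1) * ln (INR N)).
  by apply: Rmult_le_pos => //; apply: pos_INR.
case: ht => [-> | [m [-> hm]]].
  rewrite add0n; have := INR_le (leq_trans (leq_addl 1 j) hj1); lra.
set c := (6 * n * D)%N in hm.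
have hc : (12 <= c)%N by rewrite /c; nia.
have hmR := INR_lt hm.
rewrite !INR_muln !INR_expn in hmR.
have ec : INR (c - 1)%N = (INR c - 1) by rewrite minus_INR; [by [] | apply/leP; lia].
rewrite ec in hmR.
set a := INR c in hmR ec *.
have ha : (12 <= a) by rewrite /a; have := INR_le hc; rewrite (_ : INR 12 = 12%R) //; simpl; lra.
have hD4 : (0 < INR 4 * INR D ^ 2).
  apply: Rmult_lt_0_compat; first by simpl; lra.
  by apply: pow_lt; have := INR_le hD; simpl; lra.
have hK2R : (0 < INR K ^ 2) by rewrite -INR_expn; have := INR_le hK2; simpl; lra.
have hpos0 : 0 < INR 4 * INR D ^ 2 * a ^ m.
  by apply: Rmult_lt_0_compat => //; apply: pow_lt; lra.
have hmR2 : INR 4 * INR D ^ 2 * a ^ m < INR K ^ 2 * (a - 1) ^ m.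
  by rewrite /= !Rmult_1_r.
have hln := ln_increasing _ _ hpos0 hmR2.
have e1 : ln (INR 4 * INR D ^ 2 * a ^ m) = ln (INR 4 * INR D ^ 2) + INR m * ln a.
  rewrite ln_mult ?ln_pow //; try lra; apply: pow_lt; lra.
have hKp : (0 < K)%N by lia.
have hKR := INR_lt hKp; simpl in hKR.
have e2 : ln (INR K ^ 2 * (a - 1) ^ m) = ln (INR K ^ 2) + INR m * ln (a - 1).
  rewrite ln_mult ?ln_pow //; try lra; apply: pow_lt; lra.
rewrite e1 e2 in hln.
have hr := ln_pred (ltac:(lra) : (1 < a)).
have hN2R : (ln (INR K ^ 2) <= ln (INR 4 * INR D ^ 2) + ln (INR N)).
  rewrite -ln_mult; last by have := INR_le hN3; simpl; lra.
  - apply: ln_le' => //; have h := INR_le hN2; rewrite !INR_muln in h; move: h; rewrite /=; nra.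
  - done.
have hmm : (INR m < a * ln (INR N)).
  have h1 : (INR m * / a < ln (INR N)).
    have : (INR m * ln (a - 1) <= INR m * (ln a - / a)).
      by apply: Rmult_le_compat_l => //; apply: pos_INR.
    lra.
  have := Rmult_lt_compat_l a _ _ (ltac:(lra)) h1.
  rewrite (Rmult_comm (INR m)) -Rmult_assoc Rinv_r; lra.
have hca : (a * ln (INR N) <= INR (8 * n * D + 1) * ln (INR N)).
  apply: Rmult_le_compat_r => //; apply: INR_le; rewrite /c; lia.
have hj1R := INR_le hj1.
rewrite (_ : INR (m.+1 + j) = INR m + INR (1 + j)); first lra.
by rewrite -INR_addn; congr INR; lia.
Qed.

End RealPart.

Theorem theorem2 (T : finType) (e : rel T) (nb : T -> seq T)
  (X : nat -> load T) (A : nat -> T -> option T) :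
  simple_graph e -> connected_graph e -> nb_order e nb ->
  execution nb X A ->
  (* monotonicity *)
  ((forall t u w, A t u = Some w -> X t u < X t w) /\
   (forall t, Lmax (X t.+1) <= Lmax (X t) /\ Lmin (X t) <= Lmin (X t.+1))) /\
  (* convergence bound *)
  (2 <= #|T| ->
   let n := #|T| in
   let D := diameter e in
   let K := discrepancy (X 0) in
   exists t : nat,
     (if 2 * D <= K then
        Rle (INR t) (Rplus (Rmult (INR (8 * n * D + 1))
                  (ln (INR ((n * K ^ 2 + 2 * D ^ 2 - 1) %/ (2 * D ^ 2))))) (INR (2 * n * D ^ 2)))
      else t <= 2 * n * D ^ 2) /\
     one_balanced e (X t) /\
     (forall s, t <= s -> forall u, X s u = X t u)).
Proof.
move=> [Hsym _] Hconn Hnb Hex.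
split.
  split.
  - move=> t u w h; case: (Hex t) => hv _.
    have := target_lt Hnb (acc_target hv h); lia.
  - move=> t; case: (Hex t) => hv ->; split.
    + by apply/bigmax_leqP => u _; apply: (next_le_max Hnb hv).
    + case: (pickP (fun _ : T => true)) => [u _ | h0].
        have h1 := next_ge_min Hnb hv u.
        rewrite [in Z in _ <= Z]/Lmin; apply: (big_ind (fun x => Lmin (X t) <= x)).
        * apply: leq_trans h1 _; exact: leq_bigmax.
        * by move=> x y hx hy; rewrite leq_min hx hy.
        * by move=> v _; apply: (next_ge_min Hnb hv).
      have -> : Lmin (X t) = 0.
        by rewrite /Lmin /Lmax !big_pred0.
      done.
move=> hn2 n D K.
have hn : 0 < #|T| by lia.
have hD : 1 <= D.
  case/card_gt1P: hn2 => u [v [_ _ neq]].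
  have [s [ps ls ss _]] := dist_spec (Hconn u v).
  have : 1 <= Defs.dist e u v.
    rewrite -ss lt0n; apply/negP => /eqP /size0nil s0.
    by move: ls neq; rewrite s0 /= => ->; rewrite eqxx.
  move=> h; apply: leq_trans h _; exact: dist_le_D.
have hU : 4 * Psi X 0 <= n ^ 2 * K ^ 2 by apply: Psi_upper.
case hK: (2 * D <= K).
- have ex := phase1_exists Hsym Hconn Hnb Hex.
  case: (ex_minnP ex) => t1 ht1 hmin1.
  have [j [hj hbal]] := phase2 Hsym Hnb Hex ht1 hn.
  exists (t1 + j); split; last split => //; last exact: (balanced_forever Hnb Hex hbal).
  apply: final_real => //.
  case: t1 ht1 hmin1 {hj hbal} => [|m] ht1 hmin1; first by left.
  right; exists m; split => //.
  set B := n ^ 2 * D ^ 2 in ht1 hmin1.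
  have hlt : forall t', t' < m.+1 -> B < Psi X t'.
    move=> t' ht'; rewrite ltnNge; apply/negP => hle.
    have := hmin1 t' hle; lia.
  have hd := decay Hsym Hconn Hnb Hex (fun t' h => hlt t' (ltn_trans h (ltnSn m))).
  have hBm := hlt m (ltnSn m).
  rewrite -/n -/D in hd hBm *.
  set c := 6 * n * D in hd *.
  set d := c - 1 in hd *.
  have hc : 0 < c ^ m by rewrite expn_gt0 /c; lia.
  have h1 : c ^ m * B < c ^ m * Psi X m by rewrite ltn_pmul2l.
  have h2 : 4 * (c ^ m * B) < d ^ m * (n ^ 2 * K ^ 2).
    have : 4 * (d ^ m * Psi X 0) <= d ^ m * (n ^ 2 * K ^ 2).
      have E : 4 * (d ^ m * Psi X 0) = d ^ m * (4 * Psi X 0) by ring.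
      by rewrite E leq_mul2l hU orbT.
    lia.
  have E1 : 4 * (c ^ m * B) = n ^ 2 * (4 * D ^ 2 * c ^ m) by rewrite /B; ring.
  have E2 : d ^ m * (n ^ 2 * K ^ 2) = n ^ 2 * (K ^ 2 * d ^ m) by ring.
  rewrite E1 E2 ltn_pmul2l // in h2; rewrite expn_gt0; lia.
- have hK2 : K < 2 * D by rewrite ltnNge hK.
  have hP : Psi X 0 <= n ^ 2 * D ^ 2.
    have : K ^ 2 <= (2 * D) ^ 2 by rewrite leq_sqr ltnW.
    rewrite expnMn => h.
    have : n ^ 2 * K ^ 2 <= n ^ 2 * (2 ^ 2 * D ^ 2) by rewrite leq_mul2l h orbT.
    lia.
  have [j [hj hbal]] := phase2 Hsym Hnb Hex hP hn.
  rewrite add0n in hbal.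
  exists j; split; last split => //; last exact: (balanced_forever Hnb Hex hbal).
  have E1 : 2 * n * j = n * (2 * j) by ring.
  have E2 : n ^ 2 * D ^ 2 = n * (n * D ^ 2) by ring.
  move: hj; rewrite -/n E1 E2 leq_pmul2l //.
  have : n * D ^ 2 <= 2 * n * D ^ 2 by rewrite leq_mul2r leq_pmull ?orbT.
  lia.
Qed.
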